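(* The assignment $\Gamma:\mathbf{FinArb}^<_\star\to\mathbf{TArb}$ (defined below) is a well-defined functor; in particular, for every morphism $h:T\to T'$ of $\mathbf{FinArb}^<_\star$, $\Gamma(h)$ is a homomorphism of pointed edge-ordered graphs $\Gamma(T)\to\Gamma(T')$ that preserves longest paths.
   Context: A (directed) graph is $(V,\to)$ with $\to\subseteq V\times V$; $N(u)$ is the set of outgoing edges of $u$. A pointed graph has a distinguished vertex $v_0$; connected means every vertex is reachable by a path from $v_0$. A path is a finite sequence $v_1\to\cdots\to v_n$ of vertices joined by edges, with length $|\pi|$; co-initial paths share their source; $\pi\sqsubset\sigma$ means $\pi$ is a proper prefix of $\sigma$. A finite edge-ordered graph is a finite graph with a strict linear order $\triangleleft$ on each neighborhood. Lexicographic path order: if $\pi\sqsubset\sigma$ then $\pi\prec\sigma$ (symmetrically); otherwise, with $\zeta$ the longest common prefix, $u$ its target and $v_1,v_2$ the next vertices, $\pi\prec\sigma$ iff $u\to v_1\triangleleft u\to v_2$. Shortlex: $\pi\prec^s\sigma$ iff $|\pi|<|\sigma|$ or ($|\pi|=|\sigma|$ and $\pi\prec\sigma$). A homomorphism of finite pointed edge-ordered graphs $h:G\to H$ is a vertex map with (i) $u\to v$ implies $h(u)\to h(v)$; (ii) the distinguished vertex of $G$ is the unique vertex mapped to the distinguished vertex of $H$; (iii) $u\to v_1\triangleleft u\to v_2$ implies $h(u)\to h(v_1)\triangleleft h(u)\to h(v_2)$. An arborescence is a pointed graph with a unique path $v_0\rightsquigarrow u$ for every $u$. $\mathbf{FinArb}^<_\star$: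 finite edge-ordered arborescences with homomorphisms of pointed edge-ordered graphs. $\mathbf{TArb}$: objects are finite, pointed, connected, edge-ordered graphs $G$ for which there is a finite, connected, pointed, edge-ordered arborescence $T$ on the same vertices with the same distinguished point such that the edge relation of $G$ is the transitive closure of that of $T$ and $u\to v_1\triangleleft u\to v_2$ in $G$ iff $(v_0\rightsquigarrow v_1)\prec^s(v_0\rightsquigarrow v_2)$ for the unique paths in $T$; in such $G$ longest paths $u\rightsquigarrow v$ are unique. Morphisms of $\mathbf{TArb}$ are homomorphisms satisfying (i)–(iii) that map the longest path $u\rightsquigarrow v$ to the longest path $h(u)\rightsquigarrow h(v)$. $\Gamma(T)$ has the vertices and distinguished point of $T$, edge relation the transitive closure of that of $T$, and $u\to v_1\triangleleft u\to v_2$ iff $(v_0\rightsquigarrow v_1)\prec^s(v_0\rightsquigarrow v_2)$ in $T$; $\Gamma(h)(v)=h(v)$. *)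

(* Defs.v *)
From mathcomp Require Import all_boot.
Set Implicit Arguments. Unset Strict Implicit. Unset Printing Implicit Defensive.

(* A graph on a finite vertex type V is an edge relation e : rel V.
   An edge order is a Prop-valued ternary relation
   o u v1 v2  :<->  (u -> v1) <| (u -> v2). *)
Definition eorder (V : Type) := V -> V -> V -> Prop.

(* A path a ~> b: a finite nonempty sequence a = x_1 -> ... -> x_n = b,
   represented as the full list of its vertices. Its length is size p - 1. *)
Definition epath (V : eqType) (e : rel V) (a b : V) (p : seq V) : Prop :=
  exists rest, p = a :: rest /\ path e a rest /\ last a rest = b.

Definition connected_from (V : eqType) (e : rel V) (v0 : V) : Prop :=
  forall u, exists p, epath e v0 u p.

Definition is_arb (V : eqType) (e : rel V) (v0 : V) : Prop :=
  forall u, exists p, epath e v0 u p /\ forall q, epath e v0 u q -> q = p.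

Definition edge_order (V : Type) (e : rel V) (o : eorder V) : Prop :=
  forall u,
    (forall v1 v2, o u v1 v2 -> e u v1 /\ e u v2) /\
    (forall v, ~ o u v v) /\
    (forall v1 v2 v3, o u v1 v2 -> o u v2 v3 -> o u v1 v3) /\
    (forall v1 v2, e u v1 -> e u v2 -> v1 <> v2 -> o u v1 v2 \/ o u v2 v1).

(* Lexicographic order on paths. [lex_aux o x p s]: comparing the remaining
   vertices p, s after a common prefix ending at x. *)
Fixpoint lex_aux (V : eqType) (o : eorder V) (x : V) (p s : seq V) : Prop :=
  match p, s with
  | [::], [::] => False
  | [::], _ :: _ => True
  | _ :: _, [::] => False
  | a :: p', b :: s' =>
      if a == b then lex_aux o a p' s' else o x a b
  end.

Definition lex (V : eqType) (o : eorder V) (p s : seq V) : Prop :=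
  match p, s with
  | x :: p', y :: s' => x = y /\ lex_aux o x p' s'
  | _, _ => False
  end.

Definition shortlex (V : eqType) (o : eorder V) (p s : seq V) : Prop :=
  size p < size s \/ (size p = size s /\ lex o p s).

(* transitive (non-reflexive) closure *)
Definition tclos (V : finType) (e : rel V) : rel V :=
  fun u v => [exists w, e u w && connect e w v].

Definition hom (V V' : Type) (e : rel V) (o : eorder V) (v0 : V)
    (e' : rel V') (o' : eorder V') (v0' : V') (h : V -> V') : Prop :=
  (forall u v, e u v -> e' (h u) (h v)) /\
  (forall x, h x = v0' <-> x = v0) /\
  (forall u v1 v2, o u v1 v2 -> o' (h u) (h v1) (h v2)).

Definition longest_path (V : eqType) (e : rel V) (u v : V) (p : seq V) : Prop :=
  epath e u v p /\ forall q, epath e u v q -> size q <= size p.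

Definition preserves_longest (V V' : eqType) (e : rel V) (e' : rel V')
    (h : V -> V') : Prop :=
  forall u v p, longest_path e u v p -> longest_path e' (h u) (h v) (map h p).

Definition Gamma_ord (V : finType) (e : rel V) (o : eorder V) (v0 : V)
    : eorder V :=
  fun u v1 v2 => tclos e u v1 /\ tclos e u v2 /\
    exists p1 p2, epath e v0 v1 p1 /\ epath e v0 v2 p2 /\ shortlex o p1 p2.

Definition is_TArb (V : finType) (g : rel V) (og : eorder V) (v0 : V) : Prop :=
  connected_from g v0 /\ edge_order g og /\
  exists (t : rel V) (ot : eorder V),
    is_arb t v0 /\ connected_from t v0 /\ edge_order t ot /\
    g =2 tclos t /\
    (forall u v1 v2, og u v1 v2 <->
       (g u v1 /\ g u v2 /\
        exists p1 p2, epath t v0 v1 p1 /\ epath t v0 v2 p2 /\ shortlex ot p1 p2)).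

Definition TArb_hom (V V' : finType) (g : rel V) (og : eorder V) (v0 : V)
    (g' : rel V') (og' : eorder V') (v0' : V') (h : V -> V') : Prop :=
  hom g og v0 g' og' v0' h /\ preserves_longest g g' h.

(* Main.v *)
Require Import Defs.
From mathcomp Require Import all_boot.

Lemma tclosP (V : finType) (e : rel V) u v :
  tclos e u v <-> exists w r, e u w /\ path e w r /\ last w r = v.
Proof.
split.
- case/existsP => w /andP [euw /connectP [r pr Ev]].
  by exists w, r; rewrite Ev.
- case=> w [r [euw [pr lr]]]; apply/existsP; exists w; rewrite euw /=.
  by apply/connectP; exists r; rewrite ?lr.
Qed.

Lemma sub_tclos (V : finType) (e : rel V) u v : e u v -> tclos e u v.
Proof. by move=> H; apply/tclosP; exists v, [::]. Qed.

Lemma tclos_expand (V : finType) (e : rel V) a r :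
  path (tclos e) a r ->
  exists r', [/\ path e a r', last a r' = last a r & size r <= size r'].
Proof.
elim: r a => [|c r IH] a /=.
- by move=> _; exists [::].
- case/andP => /tclosP [w [r1 [eaw [p1 l1]]]] pr.
  have [r2 [p2 l2 s2]] := IH c pr.
  exists (w :: r1 ++ r2); split => /=.
  + by rewrite eaw cat_path p1 l1 p2.
  + by rewrite last_cat l1 l2.
  + by rewrite size_cat ltnS (leq_trans s2) // leq_addl.
Qed.

Lemma cat_injl (T : Type) (rr s1 s2 : seq T) : rr ++ s1 = rr ++ s2 -> s1 = s2.
Proof. by elim: rr => //= a rr IH [] /IH. Qed.

Lemma arb_uniq (V : eqType) (e : rel V) v0 a r1 r2 :
  is_arb e v0 -> path e a r1 -> path e a r2 -> last a r1 = last a r2 -> r1 = r2.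
Proof.
move=> arb p1 p2 l.
have [pa [[rr [Epa [prr lrr]]] _]] := arb a.
have [pb [_ U]] := arb (last a r1).
have E1 : v0 :: rr ++ r1 = pb.
  apply: U; exists (rr ++ r1); split; first done.
  by split; [rewrite cat_path prr lrr | rewrite last_cat lrr].
have E2 : v0 :: rr ++ r2 = pb.
  apply: U; exists (rr ++ r2); split; first done.
  by split; [rewrite cat_path prr lrr | rewrite last_cat lrr l].
move: E1; rewrite -E2 => -[]; exact: cat_injl.
Qed.

Lemma path_map_hom (V V' : eqType) (e : rel V) (e' : rel V') (h : V -> V')
  (H : forall u v, e u v -> e' (h u) (h v)) x r :
  path e x r -> path e' (h x) (map h r).
Proof.
elim: r x => [|y r IH] x //= /andP [exy pr].
by apply/andP; split; [exact: H | exact: IH].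
Qed.

Lemma lex_aux_irr (V : eqType) (o : eorder V) x r : ~ lex_aux o x r r.
Proof. elim: r x => [|a r IH] x /=; first by []. by rewrite eqxx. Qed.

Lemma lex_aux_trans (V : eqType) (o : eorder V)
  (Hirr : forall x a, ~ o x a a)
  (Htr : forall x a b c, o x a b -> o x b c -> o x a c) x p s r :
  lex_aux o x p s -> lex_aux o x s r -> lex_aux o x p r.
Proof.
elim: p x s r => [|a p IH] x [|b s] [|c r] /=; try by [].
move=> H1 H2.
case ab: (a == b) in H1; case bc: (b == c) in H2.
- move/eqP: ab => ab; move/eqP: bc => bc; subst; rewrite eqxx; exact: IH H1 H2.
- move/eqP: ab => ab; subst; by rewrite bc.
- move/eqP: bc => bc; subst; by rewrite ab.
- case ac: (a == c).
  + move/eqP: ac => ac; subst; exfalso; exact: Hirr (Htr _ _ _ _ H1 H2).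
  + exact: Htr H1 H2.
Qed.

Lemma lex_aux_total (V : eqType) (e : rel V) (o : eorder V)
  (Htot : forall x a b, e x a -> e x b -> a <> b -> o x a b \/ o x b a) x p s :
  path e x p -> path e x s -> size p = size s -> p <> s ->
  lex_aux o x p s \/ lex_aux o x s p.
Proof.
elim: p x s => [|a p IH] x [|b s] /=; try by [].
move=> /andP[exa pa] /andP[exb pb] [sz] ne.
case: (eqVneq a b) => [eab|nab].
- subst b; apply: IH => // E; apply: ne; by rewrite E.
- have nba : (b == a) = false by rewrite eq_sym (negbTE nab).
  rewrite /= ?(negbTE nab) ?nba; apply: Htot => //; exact/eqP.
Qed.

Lemma lex_aux_map (V V' : eqType) (o : eorder V) (o' : eorder V') (h : V -> V')
  (Hh : forall u a b, o u a b -> o' (h u) (h a) (h b))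
  (Hirr' : forall x a, ~ o' x a a) x p s :
  lex_aux o x p s -> lex_aux o' (h x) (map h p) (map h s).
Proof.
elim: p x s => [|a p IH] x [|b s] /=; try by [].
case: (eqVneq a b) => [<-|nab].
- rewrite !eqxx; exact: IH.
- move=> H; case: eqP => [E|_]; last exact: Hh.
  by move/Hh: H; rewrite E => /Hirr'.
Qed.

Lemma gamma_TArb (V : finType) (e : rel V) (o : eorder V) v0 :
  is_arb e v0 -> edge_order e o -> is_TArb (tclos e) (Gamma_ord e o v0) v0.
Proof.
move=> arb eo.
have conn : connected_from e v0 by move=> u; case: (arb u) => p [? _]; exists p.
have Hirr : forall x a, ~ o x a a by move=> x a; case: (eo x) => _ [H _]; exact: H.
have Htr : forall x a b c, o x a b -> o x b c -> o x a c.
  by move=> x a b c; case: (eo x) => _ [_ [H _]]; exact: H.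
have Htot : forall x a b, e x a -> e x b -> a <> b -> o x a b \/ o x b a.
  by move=> x a b; case: (eo x) => _ [_ [_ H]]; exact: H.
have Uq : forall v p1 p2, epath e v0 v p1 -> epath e v0 v p2 -> p1 = p2.
  by move=> v p1 p2 E1 E2; case: (arb v) => p [_ U]; rewrite (U _ E1) (U _ E2).
split.
  move=> u; case: (conn u) => p [r [_ [pr lr]]].
  exists (v0 :: r), r; split; first done.
  by split; [exact: (sub_path (@sub_tclos _ e) pr) | done].
split.
  move=> u; split; [| split; [| split]].
  - by move=> v1 v2 [? [? _]].
  - move=> v [_ [_ [p1 [p2 [E1 [E2 S]]]]]].
    have ? := Uq _ _ _ E1 E2; subst p2.
    case: S => [|[_ L]]; first by rewrite ltnn.
    by move: L; case: p1 {E1 E2} => [|x r] //= [_]; apply: lex_aux_irr.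
  - move=> v1 v2 v3 [t1 [_ [p1 [p2 [E1 [E2 S1]]]]]] [_ [t3 [p2' [p3 [E2' [E3 S2]]]]]].
    have ? := Uq _ _ _ E2 E2'; subst p2'.
    split; first done; split; first done.
    exists p1, p3; split; first done; split; first done.
    case: S1 => [L1|[Ez1 L1]]; case: S2 => [L2|[Ez2 L2]].
    + left; exact: ltn_trans L1 L2.
    + by left; rewrite -Ez2.
    + by left; rewrite Ez1.
    + right; split; first by rewrite Ez1.
      move: L1 L2 {E1 E2 E2' E3 Ez1 Ez2}; case: p1 => [|x p] //; case: p2 => [|y s] //.
      case: p3 => [|z r] //= [Exy L1] [Eyz L2]; subst.
      split=> //; exact: lex_aux_trans L1 L2.
  - move=> v1 v2 t1 t2 ne.
    case: (arb v1) => p1 [E1 _]; case: (arb v2) => p2 [E2 _].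
    have Hs : forall p q, shortlex o p q -> epath e v0 v1 p -> epath e v0 v2 q ->
        Gamma_ord e o v0 u v1 v2.
      by move=> p q S Ep Eq; split; [|split; [|exists p, q]].
    have Hs' : forall p q, shortlex o p q -> epath e v0 v2 p -> epath e v0 v1 q ->
        Gamma_ord e o v0 u v2 v1.
      by move=> p q S Ep Eq; split; [|split; [|exists p, q]].
    case: (ltngtP (size p1) (size p2)) => [lt|gt|eq].
    + by left; apply: (Hs p1 p2) => //; left.
    + by right; apply: (Hs' p2 p1) => //; left.
    + move: E1 E2 eq => [r1 [Ep1 [pr1 lr1]]] [r2 [Ep2 [pr2 lr2]]].
      rewrite Ep1 Ep2 /= => -[eq].
      have ne' : r1 <> r2 by move=> E; apply: ne; rewrite -lr1 -lr2 E.
      have G : forall a b ra rb, tclos e u a -> tclos e u b -> path e v0 ra -> last v0 ra = a ->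
          path e v0 rb -> last v0 rb = b -> size ra = size rb ->
          lex_aux o v0 ra rb -> Gamma_ord e o v0 u a b.
        move=> a b ra rb ta tb pa la pb lb sab L; split; first done; split; first done.
        exists (v0 :: ra), (v0 :: rb); split; first by exists ra.
        split; first by exists rb.
        by right; split; [rewrite /= sab | split].
      case: (@lex_aux_total _ _ o Htot _ _ _ pr1 pr2 eq ne') => L.
      * by left; apply: (G _ _ r1 r2).
      * by right; apply: (G _ _ r2 r1).
exists e, o; split; first done; split; first done; split; first done.
split; first by move=> ? ?.
by move=> u v1 v2; split => H; exact H.
Qed.

Arguments path_map_hom {V V' e e' h} H {x r}.
Arguments tclos_expand {V e a r}.
Arguments arb_uniq {V e v0 a r1 r2}.

Theorem lemma10p6 (V V' : finType)
    (e : rel V) (o : eorder V) (v0 : V)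
    (e' : rel V') (o' : eorder V') (v0' : V') (h : V -> V') :
  is_arb e v0 -> edge_order e o ->
  is_arb e' v0' -> edge_order e' o' ->
  hom e o v0 e' o' v0' h ->
  is_TArb (tclos e) (Gamma_ord e o v0) v0 /\
  is_TArb (tclos e') (Gamma_ord e' o' v0') v0' /\
  TArb_hom (tclos e) (Gamma_ord e o v0) v0
           (tclos e') (Gamma_ord e' o' v0') v0' h.
Proof.
move=> arb eo arb' eo' [hE [h0 hO]].
split; first exact: gamma_TArb.
split; first exact: gamma_TArb.
have Hirr' : forall x a, ~ o' x a a by move=> x a; case: (eo' x) => _ [H _]; exact: H.
have hv0 : h v0 = v0' by apply/h0.
have htc : forall u v, tclos e u v -> tclos e' (h u) (h v).
  move=> u v /tclosP [w [r [euw [pr lr]]]]; apply/tclosP.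
  exists (h w), (map h r); split; first exact: hE.
  by split; [exact: (path_map_hom hE pr) | rewrite last_map lr].
have epm : forall a b p, epath e a b p -> epath e' (h a) (h b) (map h p).
  move=> a b p [r [-> [pr lr]]]; exists (map h r); split; first done.
  by split; [exact: (path_map_hom hE pr) | rewrite last_map lr].
split.
  split; [exact: htc | split; [exact: h0 |]].
  move=> u v1 v2 [t1 [t2 [p1 [p2 [E1 [E2 S]]]]]].
  split; first exact: htc. split; first exact: htc.
  exists (map h p1), (map h p2); rewrite -hv0.
  split; first exact: epm. split; first exact: epm.
  case: S => [L|[Ez L]]; first by left; rewrite !size_map.
  right; split; first by rewrite !size_map Ez.
  move: L {E1 E2 Ez}; case: p1 => [|x r1] //; case: p2 => [|y r2] //= [Exy L]; subst.
  split=> //; exact: (@lex_aux_map _ _ o o' h hO Hirr').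
move=> u v p [[r [Ep [pr lr]]] Mx]; subst p.
split.
  exists (map h r); split; first done.
  by split; [exact: (path_map_hom htc pr) | rewrite last_map lr].
move=> q [qr [-> [pq lq]]].
have [qr' [pq' lq' sq']] := tclos_expand pq.
have [r' [pr' lr' sr']] := tclos_expand pr.
have M : size (u :: r') <= size (u :: r).
  apply: Mx; exists r'; split; first done.
  by split; [exact: (sub_path (@sub_tclos _ e) pr') | rewrite lr' lr].
have Eq : qr' = map h r'.
  apply: (arb_uniq arb' pq'); first exact: (path_map_hom hE pr').
  by rewrite lq' lq last_map lr' lr.
move: M; rewrite /= !size_map !ltnS => M.
by rewrite (leq_trans sq') // Eq size_map.
Qed.
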